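(* For all $n\ge1$, $p_n(1221,1232)=p_n(1221,1223)=1+(n-1)2^{n-2}$.
   Context: Set partitions of $[n]$ are written in canonical sequential form (restricted growth words $\pi_1\cdots\pi_n$ with $\pi_1=1$, $\pi_{i+1}\le\max(\pi_1,\dots,\pi_i)+1$). A partition contains a pattern if it has a subsequence order-isomorphic to it; $p_n(T)$ counts partitions of $[n]$ avoiding every pattern in $T$. *)

(* Defs.v *)
From mathcomp Require Import all_boot.
Set Implicit Arguments. Unset Strict Implicit. Unset Printing Implicit Defensive.

(* Set partitions of [n] in canonical sequential form: restricted growth words
   pi_1 ... pi_n over positive integers with pi_1 = 1 and
   pi_(i+1) <= max(pi_1,...,pi_i) + 1. *)
Fixpoint rgf_from (m : nat) (s : seq nat) : bool :=
  match s with
  | [::] => true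
  | x :: s' => (0 < x) && (x <= m.+1) && rgf_from (maxn m x) s'
  end.

(* rgf_from 0 forces the first letter to be 1 (since 0 < x <= 1). *)
Definition is_rgf (s : seq nat) : bool := rgf_from 0 s.

Definition order_iso (s t : seq nat) : bool :=
  (size s == size t) &&
  [forall i : 'I_(size s), forall j : 'I_(size s),
     ((nth 0 s i < nth 0 s j) == (nth 0 t i < nth 0 t j)) &&
     ((nth 0 s i == nth 0 s j) == (nth 0 t i == nth 0 t j))].

Definition contains (w p : seq nat) : bool :=
  [exists m : (size w).-tuple bool, order_iso (mask m w) p].

Definition avoids_all (T : seq (seq nat)) (w : seq nat) : bool :=
  all (fun p => ~~ contains w p) T.

(* p_n(T): the number of set partitions of [n] avoiding every pattern in T.
   Letters of a partition of [n] lie in {1,...,n}, so words are enumerated as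
   n-tuples over 'I_(n.+1). *)
Definition pn (n : nat) (T : seq (seq nat)) : nat :=
  #|[set w : n.-tuple 'I_n.+1 |
       is_rgf (map val w) && avoids_all T (map val w)]|.

(* Main.v *)
Require Import Defs.
From mathcomp Require Import all_boot zify.
Set Implicit Arguments. Unset Strict Implicit.


Fixpoint allwords (K k : nat) : seq (seq nat) :=
  if k is k'.+1 then [seq x :: w | x <- iota 0 K.+1, w <- allwords K k'] else [:: [::]].

Lemma allwordsS K k : allwords K k.+1 = [seq x :: w | x <- iota 0 K.+1, w <- allwords K k].
Proof. by []. Qed.

Lemma mem_allwords K k s : (s \in allwords K k) = (size s == k) && all (fun x => x < K.+1) s.
Proof.
elim: k s => [|k IH] s; first by case: s.
rewrite allwordsS.
apply/allpairsP/idP => [[[y w]] /= [Hy Hw ->]|]. 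
  move: Hy Hw; rewrite IH /= eqSS => Hy /andP[-> ->]; rewrite andbT.
  by have : y \in iota 0 K.+1 by []; rewrite mem_iota.
case: s => [|x s] //=; rewrite eqSS => /andP[Hs /andP[Hx Ha]].
exists (x, s); split => //=; last by rewrite IH Hs. by change (x \in iota 0 K.+1); rewrite mem_iota.
Qed.

Lemma uniq_allwords K k : uniq (allwords K k).
Proof.
elim: k => [|k IH] //; rewrite allwordsS; apply: allpairs_uniq => //; first exact: iota_uniq.
by move=> [x1 w1] [x2 w2] _ _ /= [-> ->].
Qed.

Lemma card_allwords K k (P : pred (seq nat)) :
  #|[set w : k.-tuple 'I_K.+1 | P (map val w)]| = count P (allwords K k).
Proof.
set A := [set w : k.-tuple 'I_K.+1 | P (map val w)].
rewrite cardE -(size_map (fun w : k.-tuple 'I_K.+1 => map val w)) -size_filter.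
apply: perm_size; apply: uniq_perm.
- rewrite map_inj_uniq ?enum_uniq //.
  by move=> w1 w2 /(inj_map val_inj) /val_inj.
- exact/filter_uniq/uniq_allwords.
move=> s; rewrite mem_filter mem_allwords; apply/mapP/idP.
  move=> [w]; rewrite mem_enum inE => Hw ->; rewrite Hw size_map size_tuple eqxx /=.
  by apply/allP => y /mapP [z _ ->]; exact: ltn_ord.
move=> /andP [HP /andP [/eqP Hs Ha]].
have Hsz : size (map (fun x => @inord K x) s) == k by rewrite size_map Hs.
exists (Tuple Hsz); last first.
  rewrite /= -map_comp -[LHS]map_id; apply/eq_in_map => y Hy /=.
  by rewrite inordK //; move/allP: Ha; apply.
rewrite mem_enum inE /=.
suff -> : map val (map (fun x => @inord K x) s) = s by [].
rewrite -map_comp -[RHS]map_id; apply/eq_in_map => y Hy /=.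
by rewrite inordK //; move/allP: Ha; apply.
Qed.



Fixpoint run (S : Type) (step : S -> nat -> option S) (st : S) (w : seq nat) : option S :=
  if w is x :: w' then (if step st x is Some st' then run step st' w' else None) else Some st.

Lemma run_rcons (S : Type) (step : S -> nat -> option S) st w x : run step st (rcons w x) = if run step st w is Some st' then step st' x else None.
Proof.
elim: w st => [|y w IH] st /=; first by case: (step st x).
by case: (step st y).
Qed.

Fixpoint N (S : Type) (step : S -> nat -> option S) (K k : nat) (st : S) : nat :=
  if k is k'.+1 then sumn [seq (if step st x is Some st' then N step K k' st' else 0) | x <- iota 0 K.+1]
  else 1.

Lemma NS (S : Type) (step : S -> nat -> option S) K k st : N step K k.+1 st = sumn [seq (if step st x is Some st' then N step K k st' else 0) | x <- iota 0 K.+1].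
Proof. by []. Qed.

Lemma count_run (S : Type) (step : S -> nat -> option S) K k st : count (fun w => isSome (run step st w)) (allwords K k) = N step K k st.
Proof.
elim: k st => [|k IH] st //; rewrite allwordsS NS.
rewrite count_flatten -map_comp; congr sumn; apply: eq_map => x /=.
rewrite count_map.
transitivity (count (fun w => isSome (if step st x is Some st' then run step st' w else None)) (allwords K k)); first by apply: eq_count.
case: (step st x) => [st'|]; first by rewrite IH.
by elim: (allwords K k).
Qed.

Lemma sumn_split (T : Type) (f g : T -> nat) (r : seq T) :
  sumn [seq f x + g x | x <- r] = sumn [seq f x | x <- r] + sumn [seq g x | x <- r].
Proof. elim: r => //= x r ->; lia. Qed.

Lemma sumn_ind (P : pred nat) A r : sumn [seq P x * A | x <- r] = count P r * A.
Proof. elim: r => //= x r ->; rewrite mulnDl. done. Qed.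

Lemma count_iota1 c K : count (pred1 c) (iota 0 K.+1) = (c <= K).
Proof. by rewrite count_uniq_mem ?iota_uniq // mem_iota. Qed.

Lemma count_iota_int m n : count (fun x => (2 <= x) && (x <= m)) (iota 0 n) = minn n m.+1 - 2.
Proof.
elim: n => [|n IH] //.
rewrite -[n.+1]addn1 iotaD count_cat IH /=.
case: (leqP 2 n) => h2; case: (leqP n m) => hm /=; lia.
Qed.


Lemma containsP w p : reflect (exists s, subseq s w && order_iso s p) (contains w p).
Proof.
apply: (iffP existsP) => [[m Hm]|[s /andP[/subseqP [m Hsz ->] Hi]]].
  by exists (mask m w); rewrite mask_subseq.
have Hm : size m == size w by rewrite Hsz.
by exists (Tuple Hm).
Qed.

Definition O4 (i : nat) (h : i < 4) : 'I_4 := Ordinal h.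

Ltac oiso_ext H i j := let h := fresh in
  have h := forallP (H (@O4 i isT)) (@O4 j isT); rewrite /= in h.

Lemma size4 (s : seq nat) p : size p = 4 -> order_iso s p ->
  exists a b c d, s = [:: a; b; c; d].
Proof.
move=> Hp /andP [/eqP Hs _]; rewrite Hp in Hs.
case: s Hs => [|a [|b [|c [|d [|]]]]] // _; by exists a, b, c, d.
Qed.

Ltac lt_facts x y h1 h2 h3 :=
  (have h1 : (y < x) = false by rewrite ltnNge ltnW);
  (have h2 : (x == y) = false by rewrite ltn_eqF);
  (have h3 : (y == x) = false by rewrite eq_sym ltn_eqF).

Ltac fin_iso := apply/andP; split => //; apply/forallP; case => [[|[|[|[|?]]]] ?] //; apply/forallP; case => [[|[|[|[|?]]]] ?] //=;
  idtac.

Lemma iso1221 a b c d : order_iso [:: a;b;c;d] [:: 1;2;2;1] = (a < b) && (b == c) && (d == a).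
Proof.
apply/idP/idP.
  move=> /andP [_ /forallP H].
  oiso_ext H 0 1; oiso_ext H 1 2; oiso_ext H 3 0.
  by move: H0 H1 H2 => /andP[/eqP-> _] /andP[_ /eqP->] /andP[_ /eqP->].
move=> /andP [/andP[hab /eqP<-] /eqP->].
lt_facts a b F1 F2 F3. fin_iso. all: by rewrite ?hab ?F1 ?F2 ?F3 ?ltnn ?eqxx.
Qed.

Lemma iso1232 a b c d : order_iso [:: a;b;c;d] [:: 1;2;3;2] = (a < b) && (b < c) && (d == b).
Proof.
apply/idP/idP.
  move=> /andP [_ /forallP H].
  oiso_ext H 0 1; oiso_ext H 1 2; oiso_ext H 3 1.
  by move: H0 H1 H2 => /andP[/eqP-> _] /andP[/eqP-> _] /andP[_ /eqP->].
move=> /andP [/andP[hab hbc] /eqP->].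
have hac := ltn_trans hab hbc.
lt_facts a b F1 F2 F3. lt_facts b c G1 G2 G3. lt_facts a c H1 H2 H3. fin_iso.
all: by rewrite ?hab ?hbc ?hac ?F1 ?F2 ?F3 ?G1 ?G2 ?G3 ?H1 ?H2 ?H3 ?ltnn ?eqxx.
Qed.

Lemma iso1223 a b c d : order_iso [:: a;b;c;d] [:: 1;2;2;3] = (a < b) && (b == c) && (c < d).
Proof.
apply/idP/idP.
  move=> /andP [_ /forallP H].
  oiso_ext H 0 1; oiso_ext H 1 2; oiso_ext H 2 3.
  by move: H0 H1 H2 => /andP[/eqP-> _] /andP[_ /eqP->] /andP[/eqP-> _].
move=> /andP [/andP[hab /eqP<-] hbd].
have had := ltn_trans hab hbd.
lt_facts a b F1 F2 F3. lt_facts b d G1 G2 G3. lt_facts a d H1 H2 H3. fin_iso.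
all: by rewrite ?hab ?hbd ?had ?F1 ?F2 ?F3 ?G1 ?G2 ?G3 ?H1 ?H2 ?H3 ?ltnn ?eqxx.
Qed.

Lemma c1221P w : contains w [:: 1;2;2;1] <-> exists a b, a < b /\ subseq [:: a;b;b;a] w.
Proof.
split.
  move/containsP => [s /andP[Hs Hi]].
  have [a [b [c [d E]]]] := size4 (p:=[:: _;_;_;_]) (erefl 4) Hi; subst s.
  move: Hi; rewrite iso1221 => /andP[/andP[hab /eqP E1] /eqP E2]; subst c d.
  by exists a, b.
move=> [a [b [hab Hs]]]; apply/containsP; exists [:: a;b;b;a].
by rewrite Hs iso1221 hab !eqxx.
Qed.

Lemma c1232P w : contains w [:: 1;2;3;2] <-> exists a b c, a < b < c /\ subseq [:: a;b;c;b] w.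
Proof.
split.
  move/containsP => [s /andP[Hs Hi]].
  have [a [b [c [d E]]]] := size4 (p:=[:: _;_;_;_]) (erefl 4) Hi; subst s.
  move: Hi; rewrite iso1232 => /andP[/andP[hab hbc] /eqP E2]; subst d.
  by exists a, b, c; rewrite hab hbc.
move=> [a [b [c [/andP[hab hbc] Hs]]]]; apply/containsP; exists [:: a;b;c;b].
by rewrite Hs iso1232 hab hbc !eqxx.
Qed.

Lemma c1223P w : contains w [:: 1;2;2;3] <-> exists a b c, a < b < c /\ subseq [:: a;b;b;c] w.
Proof.
split.
  move/containsP => [s /andP[Hs Hi]].
  have [a [b [c [d E]]]] := size4 (p:=[:: _;_;_;_]) (erefl 4) Hi; subst s.
  move: Hi; rewrite iso1223 => /andP[/andP[hab /eqP E1] hcd]; subst c.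
  by exists a, b, d; rewrite hab hcd.
move=> [a [b [c [/andP[hab hbc] Hs]]]]; apply/containsP; exists [:: a;b;b;c].
by rewrite Hs iso1223 hab hbc !eqxx.
Qed.


Lemma subseq_rcons2 (s : seq nat) y w x :
  subseq (rcons s y) (rcons w x) = subseq (rcons s y) w || (y == x) && subseq s w.
Proof.
rewrite -subseq_rev !rev_rcons /= -(subseq_rev (rcons s y) w) rev_rcons -(subseq_rev s w).
case: eqP => [->|_] /=; last by rewrite orbF.
apply/idP/orP => [->|[|//]]; first by right.
by apply: subseq_trans; apply: subseq_cons.
Qed.

Lemma sub4_rcons (a b c d : nat) w x : subseq [:: a;b;c;d] (rcons w x) ->
  subseq [:: a;b;c;d] w \/ (d = x /\ subseq [:: a;b;c] w).
Proof.
have := subseq_rcons2 [:: a;b;c] d w x; rewrite /= => ->.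
by case/orP => [->|/andP[/eqP -> ->]]; [left|right].
Qed.

Lemma sub2_rcons (b c : nat) w x : subseq [:: b;c] (rcons w x) ->
  subseq [:: b;c] w \/ (c = x /\ b \in w).
Proof.
have := subseq_rcons2 [:: b] c w x; rewrite /= sub1seq => ->.
by case/orP => [->|/andP[/eqP -> ->]]; [left|right].
Qed.

Lemma subseq_rcons_r (s w : seq nat) x : subseq s w -> subseq s (rcons w x).
Proof. by move=> h; apply: subseq_trans h (subseq_rcons _ _). Qed.

Lemma subseq_rcons_rr (s w : seq nat) x : subseq s w -> subseq (rcons s x) (rcons w x).
Proof. by move=> h; rewrite subseq_rcons2 eqxx h orbT. Qed.

Lemma rgf_rcons m s x :
  rgf_from m (rcons s x) = rgf_from m s && (0 < x) && (x <= (foldl maxn m s).+1).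
Proof.
elim: s m => [|y s IH] m /=; first by rewrite andbT.
by rewrite IH !andbA.
Qed.

Lemma rgf_pos m s : rgf_from m s -> forall y, y \in s -> 0 < y.
Proof.
elim: s m => [|z s IH] m //= /andP[/andP[hz _] hs] y.
by rewrite inE => /orP[/eqP->//|hy]; exact: (IH _ hs y hy).
Qed.

Lemma max_ge m s : m <= foldl maxn m s.
Proof. elim: s m => [|z s IH] m //=; apply: leq_trans (IH _); exact: leq_maxl. Qed.

Lemma mem_le_max m s y : y \in s -> y <= foldl maxn m s.
Proof.
elim: s m => [|z s IH] m //=; rewrite inE => /orP[/eqP->|/IH //].
by apply: leq_trans (max_ge _ _); exact: leq_maxr.
Qed.

Lemma rgf_head w : is_rgf w -> w = [::] \/ exists w', w = 1 :: w'.
Proof.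
case: w => [|y w]; [by left|rewrite /is_rgf /= => /andP[/andP[h1 h2] _]; right].
by exists w; congr cons; lia.
Qed.

Lemma sorted_iota n lo (s : seq nat) : sorted ltn s -> all (fun y => lo <= y < lo + n) s ->
  subseq s (iota lo n).
Proof.
elim: n lo s => [|n IH] lo [|y s] //=.
  by move=> _ /andP[h _]; lia.
move=> hs /andP[hy ha].
have hmin := order_path_min ltn_trans hs.
case: eqP => [Ey|Ney].
  subst y; apply: IH; first exact: path_sorted hs.
  apply/allP => z hz; move/allP: ha => /(_ z hz); move/allP: hmin => /(_ z hz). lia.
apply: IH => //=; apply/andP; split; first by move: hy Ney; clear; lia.
apply/allP => z hz; move/allP: ha => /(_ z hz); move/allP: hmin => /(_ z hz).
by move: hy; clear; lia.
Qed.


Definition c1221 (w : seq nat) := exists a b, a < b /\ subseq [:: a;b;b;a] w.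
Definition c1232 (w : seq nat) := exists a b c, a < b < c /\ subseq [:: a;b;c;b] w.
Definition c1223 (w : seq nat) := exists a b c, a < b < c /\ subseq [:: a;b;b;c] w.

Lemma memS (s w : seq nat) y : subseq s w -> y \in s -> y \in w.
Proof. by move=> h; apply: mem_subseq. Qed.

Lemma sub3_mem (a b c : nat) w : subseq [:: a;b;c] w -> [/\ a \in w, b \in w & c \in w].
Proof. by move=> h; split; apply: (memS h); rewrite !inE eqxx ?orbT. Qed.

Lemma c1221_rcons w x : c1221 w -> c1221 (rcons w x).
Proof. by move=> [a [b [h hs]]]; exists a, b; split=> //; exact: subseq_rcons_r. Qed.
Lemma c1232_rcons w x : c1232 w -> c1232 (rcons w x).
Proof. by move=> [a [b [c [h hs]]]]; exists a, b, c; split=> //; exact: subseq_rcons_r. Qed.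
Lemma c1223_rcons w x : c1223 w -> c1223 (rcons w x).
Proof. by move=> [a [b [c [h hs]]]]; exists a, b, c; split=> //; exact: subseq_rcons_r. Qed.

Lemma rgf_rcons_l w x : is_rgf (rcons w x) -> is_rgf w.
Proof. by rewrite /is_rgf rgf_rcons => /andP[/andP[]]. Qed.

Lemma iotaS1 m : iota 1 m.+1 = rcons (iota 1 m) m.+1.
Proof. by rewrite -cats1 -[X in iota _ X]addn1 iotaD add1n. Qed.

Definition step1 (st : nat * bool) (x : nat) : option (nat * bool) :=
  let: (m, rep) := st in
  if x == m.+1 then Some (m.+1, rep)
  else if (x == m) && (2 <= m) then Some (m, true)
  else if (x == 1) && ~~ rep then Some (m, rep) else None.

Definition Inv1 (st : nat * bool) (w : seq nat) : Prop :=
  let: (m, rep) := st in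
  [/\ is_rgf w, foldl maxn 0 w = m, subseq (iota 1 m) w,
    (rep <-> exists b, 2 <= b /\ subseq [:: b;b] w) & (~ c1221 w /\ ~ c1232 w)].

Lemma step1_ok m rep w x : Inv1 (m, rep) w ->
  (forall st', step1 (m, rep) x = Some st' -> Inv1 st' (rcons w x)) /\
  (step1 (m, rep) x = None -> ~ [/\ is_rgf (rcons w x), ~ c1221 (rcons w x) & ~ c1232 (rcons w x)]).
Proof.
move=> [hr hm hi hrep [h1 h2]].
have hle : forall y, y \in w -> y <= m by move=> y /(mem_le_max 0); rewrite hm.
have hpos : forall y, y \in w -> 0 < y by apply: rgf_pos hr.
have hrgf : forall y, 0 < y <= m.+1 -> is_rgf (rcons w y).
  by move=> y hy; move: (hr); rewrite /is_rgf rgf_rcons => ->; rewrite hm /=.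
rewrite /step1.
case: (eqVneq x m.+1) => [->|hx1].
  split => // st' [<-]; split.
  - by apply: hrgf; rewrite /= leqnn.
  - by rewrite foldl_rcons hm; lia.
  - by rewrite iotaS1; apply: subseq_rcons_rr.
  - rewrite hrep; split => [[b [hb hs]]|[b [hb /sub2_rcons [hs|[Eb hin]]]]].
      by exists b; split => //; exact: subseq_rcons_r.
      by exists b.
    by have := hle _ hin; lia.
  split.
  - move=> [a [b [hab /sub4_rcons [hs|[Ea hs]]]]]; first by apply: h1; exists a, b.
    by case: (sub3_mem hs) => _ hb _; have := hle _ hb; lia.
  - move=> [a [b [c [/andP[hab hbc] /sub4_rcons [hs|[Eb hs]]]]]]; first by apply: h2; exists a, b, c; rewrite hab hbc.
    by case: (sub3_mem hs) => _ _ hc; have := hle _ hc; lia.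
case: ifP => [/andP[/eqP Ex hm2]|hB].
    subst x; split => // st' [<-]; split.
    - by apply: hrgf; lia.
    - by rewrite foldl_rcons hm; lia.
    - exact: subseq_rcons_r.
    - split => // _; exists m; split => //.
      change (subseq (rcons [:: m] m) (rcons w m)); apply: subseq_rcons_rr.
      by rewrite sub1seq; apply: memS hi _; rewrite mem_iota; lia.
    split.
    - move=> [a [b [hab /sub4_rcons [hs|[Ea hs]]]]]; first by apply: h1; exists a, b.
      by case: (sub3_mem hs) => _ hb _; have := hle _ hb; lia.
    - move=> [a [b [c [/andP[hab hbc] /sub4_rcons [hs|[Eb hs]]]]]]; first by apply: h2; exists a, b, c; rewrite hab hbc.
      by case: (sub3_mem hs) => _ _ hc; have := hle _ hc; lia.
case: ifP => [/andP[/eqP Ex hnr]|hC].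
    subst x; have hm0 : 0 < m by move: hx1; case: (m).
    split => // st' [<-]; split.
    - by apply: hrgf; lia.
    - by rewrite foldl_rcons hm; lia.
    - exact: subseq_rcons_r.
    - rewrite hrep; split => [[b [hb hs]]|[b [hb /sub2_rcons [hs|[Eb hin]]]]].
        by exists b; split => //; exact: subseq_rcons_r.
        by exists b.
      by rewrite Eb in hb.
    split.
    - move=> [a [b [hab /sub4_rcons [hs|[Ea hs]]]]]; first by apply: h1; exists a, b.
      have : rep by apply/hrep; exists b; split; [lia | apply: subseq_trans hs; apply: subseq_cons].
      by rewrite (negbTE hnr).
    - move=> [a [b [c [/andP[hab hbc] /sub4_rcons [hs|[Eb hs]]]]]]; first by apply: h2; exists a, b, c; rewrite hab hbc.
      by case: (sub3_mem hs) => ha _ _; have := hpos _ ha; lia.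
split => // _ [hrx n1 n2].
move: (hrx); rewrite /is_rgf rgf_rcons -/(is_rgf w) hr hm /= => hx.
case: (eqVneq x 1) => [Ex|hx1'].
  subst x; move: hC; rewrite eqxx /= => /negbFE /hrep [b [hb hs]].
  case: (rgf_head hr) => [Ew|[w' Ew]]; first by rewrite Ew in hs.
  apply: n1; exists 1, b; split; first by lia.
  change (subseq (rcons [:: 1; b; b] 1) (rcons w 1)); apply: subseq_rcons_rr.
  rewrite Ew /=; move: hs; rewrite Ew /=.
  by have -> : (b == 1) = false by apply/eqP; lia.
have hxm : x < m.
  by move: hB; case: (eqVneq x m) => [Ex|hne] /=; [subst x; lia | lia].
apply: n2; exists 1, x, x.+1; split; first by lia.
change (subseq (rcons [:: 1; x; x.+1] x) (rcons w x)); apply: subseq_rcons_rr.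
apply: subseq_trans hi; apply: sorted_iota => /=; apply/and3P; split; lia.
Qed.


Lemma run1_ok w : (forall st, run step1 (0,false) w = Some st -> Inv1 st w) /\
  (run step1 (0,false) w = None -> ~ [/\ is_rgf w, ~ c1221 w & ~ c1232 w]).
Proof.
elim/last_ind: w => [|w x [IH1 IH2]].
  split => // st [<-]; split => //.
    by split => // [[b [_ hs]]].
  by split => [[a [b [_ hs]]] | [a [b [c [_ hs]]]]].
rewrite run_rcons; case E: (run step1 (0, false) w) => [[m rep]|].
  exact: step1_ok (IH1 _ E).
split => // _ [hr n1 n2]; apply: IH2 => //; split.
- exact: rgf_rcons_l hr.
- by move=> h; apply: n1; apply: c1221_rcons.
- by move=> h; apply: n2; apply: c1232_rcons.
Qed.

Lemma good1 w : is_rgf w && avoids_all [:: [:: 1; 2; 2; 1]; [:: 1; 2; 3; 2]] w = isSome (run step1 (0,false) w).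
Proof.
rewrite /avoids_all /= andbT.
have [IH1 IH2] := run1_ok w.
case E: (run step1 (0,false) w) => [[m rep]|].
  case: (IH1 _ E) => hr _ _ _ [n1 n2].
  rewrite hr /=; apply/andP; split; apply/negP; [move=> /(proj1 (c1221P w)) | move=> /(proj1 (c1232P w))] => //.
apply/negP => /andP [hr /andP [n1 n2]]; apply: (IH2 E); split => //.
  by move=> h; move/negP: n1; apply; apply/(proj2 (c1221P w)).
by move=> h; move/negP: n2; apply; apply/(proj2 (c1232P w)).
Qed.

Lemma step1_dec m rep x (f : nat * bool -> nat) :
  (if step1 (m, rep) x is Some st' then f st' else 0) =
  (x == m.+1) * f (m.+1, rep) + (x == m) * ((2 <= m) * f (m, true))
  + (x == 1) * ((~~ rep && (m != 0)) * f (m, rep)).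
Proof.
rewrite /step1; case: (eqVneq x m.+1) => [->|h1].
  case: m => [|m] /=; first by case: rep; rewrite /= ?mul0n ?mul1n; lia.
  by rewrite eqSS gtn_eqF // mul1n !mul0n; lia.
case: (eqVneq x m) => [Em|h2].
  subst x; case: (leqP 2 m) => h /=.
    have -> : (m == 1) = false by apply/eqP; lia.
    by rewrite !mul0n !mul1n; lia.
  by case: m h h1 => [|[|m]] // _ _; case: rep; rewrite /= ?mul0n ?mul1n; lia.
case: (eqVneq x 1) => [E1|h3].
  subst x; have hm : (m != 0) by case: (m) h1.
  by rewrite hm; case: rep; rewrite /= ?mul0n ?mul1n ?muln0; lia.
by rewrite !mul0n.
Qed.

Lemma N1S K k m rep : N step1 K k.+1 (m, rep) =
  (m.+1 <= K) * N step1 K k (m.+1, rep) + (m <= K) * ((2 <= m) * N step1 K k (m, true))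
  + (1 <= K) * ((~~ rep && (m != 0)) * N step1 K k (m, rep)).
Proof.
rewrite NS (eq_map (fun x => step1_dec m rep x (N step1 K k))).
by rewrite !sumn_split !sumn_ind !count_iota1.
Qed.

Lemma N1_true K k m : 2 <= m -> m + k <= K -> N step1 K k (m, true) = 2 ^ k.
Proof.
elim: k m => [|k IH] m hm hK //.
rewrite N1S IH ?IH //; try lia.
have -> : m.+1 <= K by lia. have -> : m <= K by lia. rewrite hm /= expnS; lia.
Qed.

Lemma N1_false K k m : 2 <= m -> m + k <= K -> N step1 K k (m, false) * 2 = 2 ^ k * (k + 2).
Proof.
elim: k m => [|k IH] m hm hK //.
rewrite N1S N1_true //; try lia.
have -> : m.+1 <= K by lia. have -> : m <= K by lia. have -> : 1 <= K by lia.
have -> : (m != 0) by lia.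
rewrite hm /= !mul1n !mulnDl IH ?IH; try lia.
have := IH m hm ltac:(lia); have := IH m.+1 ltac:(lia) ltac:(lia).
rewrite expnS; nia.
Qed.

Lemma N1_one K k : 1 + k <= K -> N step1 K k (1, false) * 2 = 2 + k * 2 ^ k.
Proof.
elim: k => [|k IH] hK //.
rewrite N1S.
have -> : 2 <= K by lia. have -> : 1 <= K by lia.
rewrite /= !mul1n !mul0n addn0 mulnDl IH; last by lia.
have := N1_false (k:=k) (m:=2) (K:=K) isT ltac:(lia).
rewrite expnS; nia.
Qed.

Lemma N1_init K k : 1 <= K -> N step1 K k.+1 (0, false) = N step1 K k (1, false).
Proof. by move=> hK; rewrite N1S hK /= !mul0n !addn0 mul1n. Qed.

Lemma pn1 n : 1 <= n -> pn n [:: [:: 1; 2; 2; 1]; [:: 1; 2; 3; 2]] = 1 + (n - 1) * 2 ^ (n - 2).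
Proof.
move=> hn; rewrite /pn (card_allwords _ _ (fun s => is_rgf s && avoids_all [:: [:: 1; 2; 2; 1]; [:: 1; 2; 3; 2]] s)) (eq_count good1) count_run.
case: n hn => [|k] // _; rewrite N1_init //.
have := N1_one (K:=k.+1) (k:=k) ltac:(lia).
move: (N step1 k.+1 k (1, false)) => X.
case: k => [|k]; first by rewrite /=; lia.
rewrite !expnS; have -> : k.+2 - 1 = k.+1 by lia. have -> : k.+2 - 2 = k by lia. nia.
Qed.


Definition step2 (st : nat * nat) (x : nat) : option (nat * nat) :=
  let: (m, b) := st in
  if b == 0 then
    (if x == m.+1 then Some (m.+1, 0)
     else if x == 1 then Some (m, 0)
     else if (2 <= x) && (x <= m) then Some (m, x) else None)
  else (if x == b then Some (m, b) else None).

Definition Inv2 (st : nat * nat) (w : seq nat) : Prop :=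
  let: (m, b) := st in
  [/\ is_rgf w, foldl maxn 0 w = m,
    (if b == 0 then subseq (iota 1 m) w
     else [&& 2 <= b, b <= m & subseq (rcons (iota 1 b) b) w]),
    (forall c, 2 <= c -> c != b -> ~~ subseq [:: c; c] w)
  & (~ c1221 w /\ ~ c1223 w)].

Lemma step2_ok m b w x : Inv2 (m, b) w ->
  (forall st', step2 (m, b) x = Some st' -> Inv2 st' (rcons w x)) /\
  (step2 (m, b) x = None -> ~ [/\ is_rgf (rcons w x), ~ c1221 (rcons w x) & ~ c1223 (rcons w x)]).
Proof.
move=> [hr hm hi hnr [h1 h2]].
have hle : forall y, y \in w -> y <= m by move=> y /(mem_le_max 0); rewrite hm.
have hpos : forall y, y \in w -> 0 < y by apply: rgf_pos hr.
have hrgf : forall y, 0 < y <= m.+1 -> is_rgf (rcons w y).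
  by move=> y hy; move: (hr); rewrite /is_rgf rgf_rcons => ->; rewrite hm /=.
have hrx : is_rgf (rcons w x) -> 0 < x <= m.+1.
  by rewrite /is_rgf rgf_rcons -/(is_rgf w) hr hm /=.
have sub2 : forall a c, subseq [:: a; c; c] w -> subseq [:: c; c] w.
  by move=> a c hs; apply: subseq_trans hs; apply: subseq_cons.
rewrite /step2; case: (eqVneq b 0) => [Eb|hb0].
  subst b; case: (eqVneq x m.+1) => [->|hx1].
    split => // st' [<-]; split.
    - by apply: hrgf; rewrite /= leqnn.
    - by rewrite foldl_rcons hm; lia.
    - by rewrite eqxx iotaS1; apply: subseq_rcons_rr.
    - move=> c hc _; apply/negP => /sub2_rcons [hs|[Ec hin]].
        by move/negP: (hnr c hc ltac:(lia)).
      by have := hle _ hin; lia.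
    split.
    - move=> [a [b [hab /sub4_rcons [hs|[Ea hs]]]]]; first by apply: h1; exists a, b.
      by case: (sub3_mem hs) => _ hb _; have := hle _ hb; lia.
    - move=> [a [b [c [/andP[hab hbc] /sub4_rcons [hs|[Ec hs]]]]]]; first by apply: h2; exists a, b, c; rewrite hab hbc.
      case: (sub3_mem hs) => ha _ _; have := hpos _ ha => ha0.
      by move/negP: (hnr b ltac:(lia) ltac:(lia)); apply; apply: sub2 hs.
  case: (eqVneq x 1) => [Ex|hx1'].
    subst x; have hm0 : 0 < m by move: hx1; case: (m).
    split => // st' [<-]; split.
    - by apply: hrgf; lia.
    - by rewrite foldl_rcons hm; lia.
    - exact: subseq_rcons_r.
    - move=> c hc _; apply/negP => /sub2_rcons [hs|[Ec hin]].
        by move/negP: (hnr c hc ltac:(lia)).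
      by rewrite Ec in hc.
    split.
    - move=> [a [b [hab /sub4_rcons [hs|[Ea hs]]]]]; first by apply: h1; exists a, b.
      by move/negP: (hnr b ltac:(lia) ltac:(lia)); apply; apply: sub2 hs.
    - move=> [a [b [c [/andP[hab hbc] /sub4_rcons [hs|[Ec hs]]]]]]; first by apply: h2; exists a, b, c; rewrite hab hbc.
      lia.
  case: ifP => [/andP[hx2 hxm]|hx].
    split => // st' [<-]; split.
    - by apply: hrgf; lia.
    - by rewrite foldl_rcons hm; lia.
    - have -> : (x == 0) = false by lia.
      rewrite hx2 hxm /=; apply: subseq_rcons_rr; apply: subseq_trans hi.
      have -> : iota 1 m = iota 1 x ++ iota (1 + x) (m - x) by rewrite -iotaD subnKC.
      exact: prefix_subseq.
    - move=> c hc hcx; apply/negP => /sub2_rcons [hs|[Ec hin]].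
        by move/negP: (hnr c hc ltac:(lia)).
      by rewrite Ec eqxx in hcx.
    split.
    - move=> [a [b [hab /sub4_rcons [hs|[Ea hs]]]]]; first by apply: h1; exists a, b.
      by move/negP: (hnr b ltac:(lia) ltac:(lia)); apply; apply: sub2 hs.
    - move=> [a [b [c [/andP[hab hbc] /sub4_rcons [hs|[Ec hs]]]]]]; first by apply: h2; exists a, b, c; rewrite hab hbc.
      case: (sub3_mem hs) => ha _ _; have := hpos _ ha => ha0.
      by move/negP: (hnr b ltac:(lia) ltac:(lia)); apply; apply: sub2 hs.
  split => // _ [/hrx hx' _ _]; move: hx; lia.
move: hi; rewrite (negbTE hb0) => /and3P [hb2 hbm hsub].
case: (eqVneq x b) => [Ex|hxb].
  subst x; split => // st' [<-]; split.
  - by apply: hrgf; lia.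
  - by rewrite foldl_rcons hm; lia.
  - by rewrite (negbTE hb0) hb2 hbm /=; apply: subseq_rcons_r.
  - move=> c hc hcx; apply/negP => /sub2_rcons [hs|[Ec hin]].
      by move/negP: (hnr c hc hcx).
    by rewrite Ec eqxx in hcx.
  split.
  - move=> [a [c [hac /sub4_rcons [hs|[Ea hs]]]]]; first by apply: h1; exists a, c.
    by move/negP: (hnr c ltac:(lia) ltac:(lia)); apply; apply: sub2 hs.
  - move=> [a [c [d [/andP[hac hcd] /sub4_rcons [hs|[Ed hs]]]]]]; first by apply: h2; exists a, c, d; rewrite hac hcd.
    case: (sub3_mem hs) => ha _ _; have := hpos _ ha => ha0.
    by move/negP: (hnr c ltac:(lia) ltac:(lia)); apply; apply: sub2 hs.
split => // _ [/hrx hx' n1 n2].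
case: (ltnP b x) => hbx.
  apply: n2; exists 1, b, x; split; first by lia.
  change (subseq (rcons [:: 1; b; b] x) (rcons w x)); apply: subseq_rcons_rr.
  apply: subseq_trans hsub; change (subseq (rcons [:: 1; b] b) (rcons (iota 1 b) b)); apply: subseq_rcons_rr.
  by apply: sorted_iota => /=; lia.
apply: n1; exists x, b; split; first by lia.
change (subseq (rcons [:: x; b; b] x) (rcons w x)); apply: subseq_rcons_rr.
apply: subseq_trans hsub; change (subseq (rcons [:: x; b] b) (rcons (iota 1 b) b)); apply: subseq_rcons_rr.
by apply: sorted_iota => /=; lia.
Qed.


Lemma run2_ok w : (forall st, run step2 (0,0) w = Some st -> Inv2 st w) /\
  (run step2 (0,0) w = None -> ~ [/\ is_rgf w, ~ c1221 w & ~ c1223 w]).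
Proof.
elim/last_ind: w => [|w x [IH1 IH2]].
  split => // st [<-]; split => //.
  by split => [[a [b [_ hs]]] | [a [b [c [_ hs]]]]].
rewrite run_rcons; case E: (run step2 (0, 0) w) => [[m b]|].
  exact: step2_ok (IH1 _ E).
split => // _ [hr n1 n2]; apply: IH2 => //; split.
- exact: rgf_rcons_l hr.
- by move=> h; apply: n1; apply: c1221_rcons.
- by move=> h; apply: n2; apply: c1223_rcons.
Qed.

Lemma good2 w : is_rgf w && avoids_all [:: [:: 1; 2; 2; 1]; [:: 1; 2; 2; 3]] w = isSome (run step2 (0,0) w).
Proof.
rewrite /avoids_all /= andbT.
have [IH1 IH2] := run2_ok w.
case E: (run step2 (0,0) w) => [[m b]|].
  case: (IH1 _ E) => hr _ _ _ [n1 n2].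
  by rewrite hr /=; apply/andP; split; apply/negP; [move=> /(proj1 (c1221P w)) | move=> /(proj1 (c1223P w))].
apply/negP => /andP [hr /andP [n1 n2]]; apply: (IH2 E); split => //.
  by move=> h; move/negP: n1; apply; apply/(proj2 (c1221P w)).
by move=> h; move/negP: n2; apply; apply/(proj2 (c1223P w)).
Qed.

Lemma N2B K k m b : b != 0 -> b <= K -> N step2 K k (m, b) = 1.
Proof.
move=> hb hK; elim: k => [|k IH] //; rewrite NS.
transitivity (sumn [seq (x == b) * 1 | x <- iota 0 K.+1]).
  congr sumn; apply: eq_map => x; rewrite /step2 (negbTE hb).
  by case: (eqVneq x b) => //; rewrite IH.
by rewrite sumn_ind count_iota1 hK.
Qed.

Lemma N2A K k m : m <= K -> N step2 K k.+1 (m, 0) =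
  (m.+1 <= K) * N step2 K k (m.+1, 0) + (1 <= K) * ((m != 0) * N step2 K k (m, 0)) + (minn K.+1 m.+1 - 2).
Proof.
move=> hmK; rewrite NS -count_iota_int -[count _ _]muln1 -sumn_ind.
transitivity (sumn [seq (x == m.+1) * N step2 K k (m.+1, 0) + (x == 1) * ((m != 0) * N step2 K k (m, 0))
   + ((2 <= x) && (x <= m)) * 1 | x <- iota 0 K.+1]).
  apply/congr1/eq_in_map => x; rewrite mem_iota => /andP[_ hxK] /=.
  case: (eqVneq x m.+1) => [->|h1].
    case: m hmK => [|m] hmK /=; first by rewrite mul1n; lia.
    by rewrite ltnn !mul0n mul1n; lia.
  case: (eqVneq x 1) => [E1|h3].
    subst x; case: (eqVneq m 0) => [E0|hm0]; first by subst m.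
    rewrite /= !mul1n mul0n; lia.
  case: ifP => [/andP[hx2 hxm]|hx].
    by rewrite N2B //; lia.
  by rewrite !mul0n.
by rewrite !sumn_split !sumn_ind !count_iota1.
Qed.

Lemma N2_A K k m : m.+1 + k <= K ->
  N step2 K k (m.+1, 0) * 2 + 2 * m = 2 + k * 2 ^ k + m * 2 ^ k.+1.
Proof.
elim: k m => [|k IH] m hK; first by rewrite /=; lia.
rewrite N2A; last by lia.
have -> : m.+2 <= K by lia. have -> : 1 <= K by lia.
have -> : minn K.+1 m.+2 - 2 = m by lia.
rewrite /= !mul1n.
have := IH m ltac:(lia); have := IH m.+1 ltac:(lia).
rewrite !expnS; nia.
Qed.

Lemma pn2 n : 1 <= n -> pn n [:: [:: 1; 2; 2; 1]; [:: 1; 2; 2; 3]] = 1 + (n - 1) * 2 ^ (n - 2).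
Proof.
move=> hn; rewrite /pn (card_allwords _ _ (fun s => is_rgf s && avoids_all [:: [:: 1; 2; 2; 1]; [:: 1; 2; 2; 3]] s)) (eq_count good2) count_run.
case: n hn => [|k] // _.
rewrite N2A //.
have -> : minn k.+2 1 - 2 = 0 by lia.
rewrite /= mul1n mul0n muln0 !addn0.
have := N2_A (K:=k.+1) (k:=k) (m:=0) ltac:(lia).
move: (N step2 k.+1 k (1, 0)) => X.
case: k => [|k]; first by rewrite /=; lia.
rewrite !expnS; have -> : k.+2 - 1 = k.+1 by lia. have -> : k.+2 - 2 = k by lia. nia.
Qed.


Theorem proposition4p12 (n : nat) : 1 <= n ->
  pn n [:: [:: 1; 2; 2; 1]; [:: 1; 2; 3; 2]] = 1 + (n - 1) * 2 ^ (n - 2) /\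
  pn n [:: [:: 1; 2; 2; 1]; [:: 1; 2; 2; 3]] = 1 + (n - 1) * 2 ^ (n - 2).
Proof. by move=> hn; split; [apply: pn1 | apply: pn2]. Qed.
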